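(* Let $A_1,\dots,A_n\in\mathbb{C}^{s\times s}$ be matrices such that (i) $A_i^2=-\frac14\,\mathrm{id}_s$ for all $i$; (ii) $A_iA_j-A_jA_i=0$ whenever $i\ne j$ do not form an edge of the Dynkin diagram; (iii) $A_iA_j+A_jA_i=0$ whenever $i,j$ form an edge of the Dynkin diagram. Then the assignment $X_i\mapsto A_i$ extends to a Lie algebra representation $\rho:\mathfrak{k}\to\mathrm{End}(\mathbb{C}^s)$ which is a generalized spin representation, i.e. $\rho(X_i)^2=-\frac14\mathrm{id}_s$ for all $i$.
   Context: Let $A=(a_{ij})_{1\le i,j\le n}$ be a symmetrizable generalized Cartan matrix that is simply laced (all off-diagonal entries are $0$ or $-1$); its Dynkin diagram has vertices $1,\dots,n$ and an edge between $i\neq j$ iff $a_{ij}=-1$. Let $\mathfrak{g}=\mathfrak{g}(A)$ be the split real Kac–Moody algebra with Chevalley generators $e_i,f_i$ and Cartan subalgebra $\mathfrak h$, and let $\omega$ be its Chevalley involution ($\omega(e_i)=-f_i$, $\omega(f_i)=-e_i$, $\omega(h)=-h$ for $h\in\mathfrak h$). The maximal compact subalgebra is $\mathfrak{k}=\mathrm{Fix}(\omega)$. The Berman generators are $X_i:=e_i-f_i\in\mathfrak k$; $\mathfrak{k}$ is isomorphic to the real Lie algebra generated by $X_1,\dots,X_n$ subject to the relations $[X_i,[X_i,X_j]]=-X_j$ if $a_{ij}=-1$ and $[X_i,X_j]=0$ if $a_{ij}=0$. *)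

(* Defs.v *)
From HB Require Import structures.
From mathcomp Require Import all_boot all_order all_algebra.
From mathcomp Require Import reals.
From mathcomp Require Import complex.
Set Implicit Arguments. Unset Strict Implicit. Unset Printing Implicit Defensive.
Import Order.TTheory GRing.Theory Num.Theory.
Local Open Scope ring_scope.

Definition simply_laced_GCM (n : nat) (A : 'M[int]_n) : Prop :=
  (forall i, A i i = 2%:Z) /\
  (forall i j, i != j -> A i j = 0 \/ A i j = -1) /\
  (forall i j, A i j = 0 <-> A j i = 0).

(** Symmetrizable: A = D B with D positive diagonal, B symmetric;
    equivalently there are positive d_i with A i j / d_i = A j i / d_j. *)
Definition symmetrizable (n : nat) (A : 'M[int]_n) : Prop :=
  exists d : 'I_n -> rat, (forall i, 0 < d i) /\
    (forall i j, (A i j)%:~R * d j = (A j i)%:~R * d i :> rat).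

Inductive lterm (R : Type) (n : nat) : Type :=
| LGen of 'I_n
| LZero
| LAdd of lterm R n & lterm R n
| LScale of R & lterm R n
| LBr of lterm R n & lterm R n.
Arguments LZero {R n}.

(** The congruence defining k = real Lie algebra generated by X_i subject to
    the Berman relations: the smallest congruence containing the real vector
    space axioms, the Lie algebra axioms (bilinearity, alternating, Jacobi)
    and the relations [X_i,[X_i,X_j]] = -X_j if a_ij = -1, [X_i,X_j] = 0 if
    a_ij = 0. *)
Section KCong.
Variables (R : realType) (n : nat) (A : 'M[int]_n).
Local Notation T := (lterm R n).
Inductive kcong : T -> T -> Prop :=
| kc_refl t : kcong t t
| kc_sym t u : kcong t u -> kcong u t
| kc_trans t u v : kcong t u -> kcong u v -> kcong t v
| kc_add t t' u u' : kcong t t' -> kcong u u' -> kcong (LAdd t u) (LAdd t' u')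
| kc_scale r t t' : kcong t t' -> kcong (LScale r t) (LScale r t')
| kc_br t t' u u' : kcong t t' -> kcong u u' -> kcong (LBr t u) (LBr t' u')
| kc_addA t u v : kcong (LAdd t (LAdd u v)) (LAdd (LAdd t u) v)
| kc_addC t u : kcong (LAdd t u) (LAdd u t)
| kc_add0 t : kcong (LAdd LZero t) t
| kc_addN t : kcong (LAdd t (LScale (-1) t)) LZero
| kc_scale1 t : kcong (LScale 1 t) t
| kc_scaleA r s t : kcong (LScale r (LScale s t)) (LScale (r * s) t)
| kc_scaleDr r t u : kcong (LScale r (LAdd t u)) (LAdd (LScale r t) (LScale r u))
| kc_scaleDl r s t : kcong (LScale (r + s) t) (LAdd (LScale r t) (LScale s t))
| kc_brDl t u v : kcong (LBr (LAdd t u) v) (LAdd (LBr t v) (LBr u v))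
| kc_brDr t u v : kcong (LBr t (LAdd u v)) (LAdd (LBr t u) (LBr t v))
| kc_brZl r t u : kcong (LBr (LScale r t) u) (LScale r (LBr t u))
| kc_brZr r t u : kcong (LBr t (LScale r u)) (LScale r (LBr t u))
| kc_brxx t : kcong (LBr t t) LZero
| kc_jacobi t u v :
    kcong (LAdd (LBr t (LBr u v)) (LAdd (LBr u (LBr v t)) (LBr v (LBr t u)))) LZero
| kc_rel_edge i j : A i j = -1 ->
    kcong (LBr (LGen R i) (LBr (LGen R i) (LGen R j))) (LScale (-1) (LGen R j))
| kc_rel_nonedge i j : A i j = 0 ->
    kcong (LBr (LGen R i) (LGen R j)) LZero.
End KCong.

(** A map rho on formal expressions that is well defined on the quotient k
    (respects kcong), real-linear and bracket preserving, i.e. a Lie algebra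
    representation of k on C^s (C = R[i]), with commutator bracket on matrices. *)
Definition is_k_rep (R : realType) (n s : nat) (A : 'M[int]_n)
    (rho : lterm R n -> 'M[R[i]]_s) : Prop :=
  [/\ forall t u, kcong A t u -> rho t = rho u,
      rho LZero = 0,
      forall t u, rho (LAdd t u) = rho t + rho u,
      forall r t, rho (LScale r t) = (r%:C)%C *: rho t
    & forall t u, rho (LBr t u) = rho t *m rho u - rho u *m rho t].

Definition generalized_spin (R : realType) (n s : nat)
    (rho : lterm R n -> 'M[R[i]]_s) : Prop :=
  forall i, rho (LGen R i) *m rho (LGen R i) = (- 4%:R^-1) %:M.

(* Main.v *)
Require Import Defs.
From HB Require Import structures.
From mathcomp Require Import all_boot all_order all_algebra.
From mathcomp Require Import reals.
From mathcomp Require Import complex.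
From mathcomp Require Import ring.
Import Order.TTheory GRing.Theory Num.Theory.
Local Open Scope ring_scope.

Lemma zmod_aux (V : zmodType) (x1 x2 x3 x4 x6 x7 : V) :
  x1 - x2 + x4 - x3 + x3 - x6 + x2 - x7 + x7 - x4 + x6 - x1 = 0.
Proof.
rewrite !addrNK (addrAC _ (-x6) x2).
rewrite (addrAC _ x4 x2) addrNK (addrAC _ (-x6) (-x4)) addrK addrNK subrr //.
Qed.

Section S.
Variables (R : realType) (n s : nat) (M : 'I_n -> 'M[R[i]]_s).

Fixpoint ev (t : lterm R n) : 'M[R[i]]_s :=
  match t with
  | LGen k => M k
  | LZero => 0
  | LAdd a b => ev a + ev b
  | LScale r a => (r%:C)%C *: ev a
  | LBr a b => ev a *m ev b - ev b *m ev a
  end.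

Lemma jac (a b c : 'M[R[i]]_s) :
  a *m (b *m c - c *m b) - (b *m c - c *m b) *m a +
  (b *m (c *m a - a *m c) - (c *m a - a *m c) *m b +
   (c *m (a *m b - b *m a) - (a *m b - b *m a) *m c)) = 0.
Proof.
rewrite !mulmxBl !mulmxBr !mulmxA !opprB !addrA.
exact: zmod_aux.
Qed.
End S.

Theorem corollary2p4 (R : realType) (n s : nat) (A : 'M[int]_n)
  (hA : simply_laced_GCM A) (hsym : symmetrizable A)
  (M : 'I_n -> 'M[R[i]]_s)
  (h1 : forall k, M k *m M k = (- 4%:R^-1) %:M)
  (h2 : forall k l, k != l -> A k l = 0 -> M k *m M l - M l *m M k = 0)
  (h3 : forall k l, A k l = -1 -> M k *m M l + M l *m M k = 0) :
  exists rho : lterm R n -> 'M[R[i]]_s,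
    [/\ is_k_rep A rho, (forall k, rho (LGen R k) = M k)
      & generalized_spin rho].
Proof.
exists (@ev R n s M); have hk : is_k_rep A (@ev R n s M).
  split => //; move=> t u; elim => {t u} /=.
- by [].
- by move=> ????.
- by move=> ??? _ -> _ ->.
- by move=> ???? _ -> _ ->.
- by move=> ??? _ ->.
- by move=> ???? _ -> _ ->.
- by move=> ???; rewrite addrA.
- by move=> ??; rewrite addrC.
- by move=> ?; rewrite add0r.
- by move=> ?; rewrite rmorphN1 scaleN1r subrr.
- by move=> ?; rewrite rmorph1 scale1r.
- by move=> ???; rewrite scalerA rmorphM.
- by move=> ???; rewrite scalerDr.
- by move=> ???; rewrite rmorphD scalerDl.
- by move=> ???; rewrite mulmxDl mulmxDr opprD addrACA.
- by move=> ???; rewrite mulmxDl mulmxDr opprD addrACA.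
- by move=> ???; rewrite -scalemxAl -scalemxAr scalerBr.
- by move=> ???; rewrite -scalemxAl -scalemxAr scalerBr.
- by move=> ?; rewrite subrr.
- by move=> ???; apply: jac.
- move=> i j hij.
  have e : M j *m M i = - (M i *m M j).
    by apply/eqP; rewrite -addr_eq0 addrC h3.
  rewrite e opprK mulmxDr mulmxDl !mulmxA h1 -(mulmxA (M i)) e mulmxN mulmxA h1.
  rewrite !mul_scalar_mx rmorphN1 scaleN1r opprD !opprK -!scalerDl -scaleN1r.
  congr (_ *: _).
  have h4 : (4%:R : R[i]) != 0 by rewrite pnatr_eq0.
  by field.
- move=> i j hij.
  have hne : i != j.
    apply/eqP => eij; move: hij; rewrite eij; case: hA => -> _ //.
  exact: h2.
split => // k /=; exact: h1.
Qed.
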